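(* For $0<\alpha\le 1$, integers $n,m\ge 0$ and $\delta\in(0,1)$, define $$c_\alpha(n,m,\delta)=\frac{\int_0^\delta \theta^{\alpha m}(1-\theta^\alpha)^n\,\mathrm{d}\theta}{\int_0^1 \theta^{\alpha m}(1-\theta^\alpha)^n\,\mathrm{d}\theta}.$$ Let $\varphi(\theta)=\theta^\alpha$ and $\psi(\theta)=\theta^\beta$ with $1\ge\alpha>\beta>0$. Then $\varphi(\theta)\le\psi(\theta)$ for all $\theta\in[0,1]$, and $c_\alpha(n,m,\delta)\le c_\beta(n,m,\delta)$ for all $n,m\in\mathbb{N}$ and all $\delta\in(0,1)$.
   Context: Interpretation: $\varphi(\theta)$ is the ''effectiveness function'' of a sampling method, i.e. the probability that one sample is negative when the true error probability is $\theta$; $c_\alpha(n,m,\delta)$ (written $c_\varphi$ in the paper) is the posterior probability, under a uniform prior on $\theta\in[0,1]$, that $\theta<\delta$ after observing $m$ negative and $n$ positive samples produced by a method with effectiveness $\theta^\alpha$. $\mathbb{N}$ includes $0$. *)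

(* Defs.v *)
From HB Require Import structures.
From mathcomp Require Import all_boot all_order all_algebra.
From mathcomp Require Import all_classical all_reals all_analysis.
Set Implicit Arguments. Unset Strict Implicit. Unset Printing Implicit Defensive.
Import Order.TTheory GRing.Theory Num.Theory.
Local Open Scope classical_set_scope.
Local Open Scope ring_scope.

Definition c_integrand {R : realType} (alpha : R) (n m : nat) (t : R) : R :=
  t `^ (alpha * m%:R) * (1 - t `^ alpha) ^+ n.

Definition c_alpha {R : realType} (alpha : R) (n m : nat) (delta : R) : R :=
  Rintegral lebesgue_measure `[0, delta] (c_integrand alpha n m) /
  Rintegral lebesgue_measure `[0, 1] (c_integrand alpha n m).

(* Main.v *)
Require Import Defs.
From HB Require Import structures.
From mathcomp Require Import all_boot all_order all_algebra.
From mathcomp Require Import all_classical all_reals all_analysis.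
From mathcomp Require Import ring lra measurable_realfun.
Import Order.TTheory GRing.Theory Num.Theory.
Local Open Scope classical_set_scope.
Local Open Scope ring_scope.

Section aux.
Context {R : realType}.
Notation mu := (@lebesgue_measure R).

Lemma int01 (h : R -> R) (M : R) : measurable_fun setT h ->
  (forall t, 0 <= t <= 1 -> `|h t| <= M) ->
  mu.-integrable `[0, 1] (EFin \o h).
Proof.
move=> mh hM; apply: measurable_bounded_integrable.
- exact: measurable_itv.
- have := @lebesgue_measure_itv R `[0, 1]. rewrite /= => ->. by rewrite lte_fin ltr01 ltry.
- exact: measurable_funS mh.
exists M; split; first by rewrite num_real.
move=> x Mx t /=; rewrite in_itv/= => ht.
by apply: le_trans (hM _ ht) (ltW Mx).
Qed.

Lemma conv_pow (p l x y : R) : 1 <= p -> 0 <= l <= 1 -> 0 <= x -> 0 <= y ->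
  (l * x + (1 - l) * y) `^ p <= l * x `^ p + (1 - l) * y `^ p.
Proof.
move=> p1 /andP[l0 l1] x0 y0.
have := @convex_powR R p p1 (Itv01 l0 l1) x y.
rewrite !inE/= !in_itv/= !andbT => /(_ x0 y0).
by rewrite !convRE.
Qed.

Lemma ci_pow x n m (t : R) : 0 <= t ->
  c_integrand x n m t = (t `^ x) ^+ m * (1 - t `^ x) ^+ n.
Proof. by move=> t0; rewrite /c_integrand powRrM powR_mulrn // powR_ge0. Qed.

Lemma powR_le1 (t x : R) : 0 <= t -> t <= 1 -> 0 <= x -> t `^ x <= 1.
Proof.
move=> t0 t1 x0.
have := @ge0_ler_powR R x x0 t 1; rewrite powR1; apply => //.
by rewrite nnegrE.
Qed.

Lemma slope (p a b : R) : 1 <= p -> 0 <= a -> a <= b -> b <= 1 ->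
  (1 - a `^ p) * (1 - b) <= (1 - b `^ p) * (1 - a).
Proof.
move=> p1 a0 ab b1.
have [a1|a1] := eqVneq a 1.
  have b1' : b = 1 by apply/eqP; rewrite eq_le b1 -a1 ab.
  by rewrite a1 b1' !subrr !mulr0.
have a1' : a < 1 by rewrite lt_neqAle a1 (le_trans ab b1).
have ha : 0 < 1 - a by rewrite subr_gt0.
pose l := (1 - b) / (1 - a).
have l0 : 0 <= l by rewrite divr_ge0 // ?subr_ge0 // ltW.
have l1 : l <= 1 by rewrite ler_pdivrMr // mul1r lerB.
have e : b = l * a + (1 - l) * 1.
  rewrite /l; field; by rewrite lt0r_neq0.
have := @conv_pow p l a 1 p1 (introT andP (conj l0 l1)) a0 ler01.
rewrite -e powR1 mulr1 => H.
have H2 : (1 - a) * b `^ p <= (1 - b) * a `^ p + (b - a).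
  have -> : (1 - b) * a `^ p + (b - a) = (1 - a) * (l * a `^ p + (1 - l)).
    rewrite /l; field; by rewrite lt0r_neq0.
  by rewrite ler_wpM2l // ltW.
nra.
Qed.

Lemma key_alg (A B a b : R) m n : 0 <= a -> a <= b -> b <= 1 ->
  0 <= A -> A <= 1 -> 0 <= B -> B <= 1 ->
  A * b <= B * a -> (1 - A) * (1 - b) <= (1 - B) * (1 - a) ->
  A ^+ m * (1 - A) ^+ n * (b ^+ m * (1 - b) ^+ n) <=
  B ^+ m * (1 - B) ^+ n * (a ^+ m * (1 - a) ^+ n).
Proof.
move=> a0 ab b1 A0 A1 B0 B1 H1 H2.
have b0 : 0 <= b by apply: le_trans ab.
have e1 : A ^+ m * (1 - A) ^+ n * (b ^+ m * (1 - b) ^+ n) =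
   (A * b) ^+ m * ((1 - A) * (1 - b)) ^+ n by rewrite !exprMn; ring.
have e2 : B ^+ m * (1 - B) ^+ n * (a ^+ m * (1 - a) ^+ n) =
   (B * a) ^+ m * ((1 - B) * (1 - a)) ^+ n by rewrite !exprMn; ring.
rewrite e1 e2.
apply: ler_pM.
- by rewrite exprn_ge0 // mulr_ge0.
- by rewrite exprn_ge0 // mulr_ge0 // subr_ge0.
- apply: lerXn2r; rewrite ?nnegrE //; exact: mulr_ge0.
- apply: lerXn2r; rewrite ?nnegrE //; apply: mulr_ge0; rewrite subr_ge0 //; exact: le_trans ab b1.
Qed.

Lemma key (al be : R) n m (t s : R) : 0 < be -> be < al -> 0 <= t -> t <= s -> s <= 1 ->
  c_integrand al n m t * c_integrand be n m s <=
  c_integrand al n m s * c_integrand be n m t.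
Proof.
move=> be0 beal t0 ts s1.
have s0 : 0 <= s by apply: le_trans ts.
have t1 : t <= 1 by apply: le_trans s1.
rewrite !ci_pow //.
pose p := al / be.
have p1 : 1 <= p by rewrite /p ler_pdivlMr // mul1r ltW.
have Tal : t `^ al = (t `^ be) `^ p.
  by rewrite -powRrM /p mulrC divfK // gt_eqF.
have Sal : s `^ al = (s `^ be) `^ p.
  by rewrite -powRrM /p mulrC divfK // gt_eqF.
rewrite Tal Sal.
have a0 : 0 <= t `^ be by apply: powR_ge0.
have ab : t `^ be <= s `^ be by apply: ge0_ler_powR; rewrite ?nnegrE // ltW.
have b1 : s `^ be <= 1 by apply: powR_le1 => //; exact: ltW.
move: (t `^ be) (s `^ be) a0 ab b1 => a b a0 ab b1.
have a1 : a <= 1 by apply: le_trans b1.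
have p0 : 0 <= p by exact: le_trans ler01 p1.
have ap1 : a `^ p <= 1 by exact: powR_le1 a0 a1 p0.
have bp1 : b `^ p <= 1 by exact: powR_le1 (le_trans a0 ab) b1 p0.
have H1 : a `^ p * b <= b `^ p * a.
  have [->|a0'] := eqVneq a 0.
    by rewrite powR0 ?mul0r ?mulr0 // gt_eqF // (lt_le_trans ltr01).
  have ap : 0 < a by rewrite lt0r a0' a0.
  have pp : 0 < p by apply: lt_le_trans p1.
  rewrite -(mulr_powRB1 a0 pp) -(mulr_powRB1 (le_trans a0 ab) pp).
  rewrite mulrAC [X in _ <= X]mulrAC [b * a]mulrC.
  apply: ler_wpM2l; first by rewrite mulr_ge0 // (le_trans a0 ab).
  apply: ge0_ler_powR; rewrite ?nnegrE ?subr_ge0 //.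
  exact: le_trans a0 ab.
have H2 := @slope p a b p1 a0 ab b1.
apply: key_alg => //; exact: powR_ge0.
Qed.

Lemma final (F F' G G' a b : R) : 0 <= F -> 0 <= F' -> 0 <= G -> 0 <= G' ->
  0 < a -> 0 < b -> F * b <= a * G -> a * G' <= F' * b ->
  F / (F + F') <= G / (G + G').
Proof.
move=> F0 F'0 G0 G'0 a0 b0 H1 H2.
have H : F * G' <= G * F'.
  have := ler_pM (mulr_ge0 F0 (ltW b0)) (mulr_ge0 (ltW a0) G'0) H1 H2.
  have -> : F * b * (a * G') = (F * G') * (a * b) by ring.
  have -> : a * G * (F' * b) = (G * F') * (a * b) by ring.
  by rewrite ler_pM2r // mulr_gt0.
have [FF|FF] := eqVneq (F + F') 0.
  by rewrite FF invr0 mulr0 divr_ge0 // addr_ge0.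
have [GG|GG] := eqVneq (G + G') 0.
  have G00 : G = 0 by lra.
  have Fb : F * b <= 0 by move: H1; rewrite G00 mulr0.
  have F00 : F = 0.
    apply/eqP; rewrite eq_le F0 andbT.
    by rewrite -(ler_pM2r b0) mul0r.
  by rewrite F00 mul0r divr_ge0 // addr_ge0.
rewrite -subr_ge0.
have -> : G / (G + G') - F / (F + F') = (G * F' - F * G') / ((F + F') * (G + G')).
  by field; apply/andP; split.
by rewrite divr_ge0 ?subr_ge0 // mulr_ge0 // addr_ge0.
Qed.

Lemma ci_01 x n m (t : R) : 0 <= x -> 0 <= t <= 1 ->
  0 <= c_integrand x n m t <= 1.
Proof.
move=> x0 /andP[t0 t1]; rewrite ci_pow //.
have h1 : t `^ x <= 1 by exact: powR_le1.
have h0 : 0 <= t `^ x by exact: powR_ge0.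
have h2 : 0 <= 1 - t `^ x by rewrite subr_ge0.
have h3 : 1 - t `^ x <= 1 by rewrite lerBlDr lerDl.
apply/andP; split; first by rewrite mulr_ge0 // exprn_ge0.
by rewrite mulr_ile1 ?exprn_ge0 ?exprn_ile1.
Qed.

Lemma ci_gt0 x n m (t : R) : 0 < x -> 0 < t < 1 -> 0 < c_integrand x n m t.
Proof.
move=> x0 /andP[t0 t1]; rewrite ci_pow ?ltW //.
have h : t `^ x < 1.
  have := @gt0_ltr_powR R x x0 t 1; rewrite powR1; apply => //;
    by rewrite nnegrE ?ltW.
by rewrite mulr_gt0 // exprn_gt0 ?powR_gt0 ?subr_gt0.
Qed.

Lemma ci_meas x n m : measurable_fun setT (c_integrand (R:=R) x n m).
Proof.
apply: measurable_funM; first exact: measurable_powR.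
apply: measurable_funX; apply: measurable_funB; first exact: measurable_cst.
exact: measurable_powR.
Qed.

Lemma ci_int x n m : 0 <= x -> mu.-integrable `[0, 1] (EFin \o c_integrand x n m).
Proof.
move=> x0; apply: (@int01 _ 1); first exact: ci_meas.
move=> t ht; have /andP[h0 h1] := @ci_01 x n m t x0 ht.
by rewrite ger0_norm.
Qed.

Lemma ci_intZ k x n m : 0 <= x ->
  mu.-integrable `[0, 1] (EFin \o (fun t => k * c_integrand x n m t)).
Proof.
move=> x0; apply: (@int01 _ `|k|).
  by apply: measurable_funM; [exact: measurable_cst | exact: ci_meas].
move=> t ht; have /andP[h0 h1] := @ci_01 x n m t x0 ht.
by rewrite normrM (ger0_norm h0) ler_piMr.
Qed.

Lemma ci_intZr k x n m : 0 <= x ->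
  mu.-integrable `[0, 1] (EFin \o (fun t => c_integrand x n m t * k)).
Proof.
move=> x0; apply: (@int01 _ `|k|).
  by apply: measurable_funM; [exact: ci_meas | exact: measurable_cst].
move=> t ht; have /andP[h0 h1] := @ci_01 x n m t x0 ht.
by rewrite normrM (ger0_norm h0) ler_piMl.
Qed.
End aux.

Theorem theorem1 (R : realType) (alpha beta : R) :
  0 < beta -> beta < alpha -> alpha <= 1 ->
  (forall theta : R, 0 <= theta <= 1 -> theta `^ alpha <= theta `^ beta) /\
  (forall (n m : nat) (delta : R), 0 < delta < 1 ->
     c_alpha alpha n m delta <= c_alpha beta n m delta).
Proof.
move=> be0 beal al1.
have al0 : 0 < alpha by apply: lt_trans beal.
split.
  move=> th /andP[th0 th1].
  have [->|thn0] := eqVneq th 0.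
    by rewrite !powR0 // gt_eqF.
  apply: ger_powR; last exact: ltW.
  by rewrite lt0r thn0 th0 th1.
move=> n m d /andP[d0 d1].
rewrite /c_alpha.
have mD : measurable (`[0, d] : set R) by exact: measurable_itv.
have mE : measurable (`]d, 1] : set R) by exact: measurable_itv.
have sD : (`[0, d] : set R) `<=` `[0, 1].
  move=> t /=; rewrite !in_itv /= => /andP[-> td] /=.
  exact: (le_trans td (ltW d1)).
have sE : (`]d, 1] : set R) `<=` `[0, 1].
  move=> t /=; rewrite !in_itv /= => /andP[td ->]; rewrite andbT.
  exact: (le_trans (ltW d0) (ltW td)).
have intD : forall h : R -> R, lebesgue_measure.-integrable `[0, 1] (EFin \o h) ->
    lebesgue_measure.-integrable `[0, d] (EFin \o h).
  by move=> h; apply: integrableS => //; exact: measurable_itv.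
have intE : forall h : R -> R, lebesgue_measure.-integrable `[0, 1] (EFin \o h) ->
    lebesgue_measure.-integrable `]d, 1] (EFin \o h).
  by move=> h; apply: integrableS => //; exact: measurable_itv.
have split1 : forall x, 0 <= x ->
   Rintegral lebesgue_measure `[0, 1] (c_integrand x n m) =
   Rintegral lebesgue_measure `[0, d] (c_integrand x n m) +
   Rintegral lebesgue_measure `]d, 1] (c_integrand x n m).
  move=> x x0; rewrite -(Rintegral_itvB (@ci_int R x n m x0)) ?bnd_simp ?ltW //.
  by rewrite addrC subrK.
rewrite (split1 alpha (ltW al0)) (split1 beta (ltW be0)).
have d01 : 0 < d < 1 by rewrite d0 d1.
apply: (@final R _ _ _ _ (c_integrand alpha n m d) (c_integrand beta n m d)).
- apply: Rintegral_ge0 => t /=; rewrite in_itv /= => ht.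
  by have /andP[] := @ci_01 R alpha n m t (ltW al0) (sD _ ht).
- apply: Rintegral_ge0 => t /=; rewrite in_itv /= => ht.
  by have /andP[] := @ci_01 R alpha n m t (ltW al0) (sE _ ht).
- apply: Rintegral_ge0 => t /=; rewrite in_itv /= => ht.
  by have /andP[] := @ci_01 R beta n m t (ltW be0) (sD _ ht).
- apply: Rintegral_ge0 => t /=; rewrite in_itv /= => ht.
  by have /andP[] := @ci_01 R beta n m t (ltW be0) (sE _ ht).
- exact: ci_gt0.
- exact: ci_gt0.
- rewrite -RintegralZr //; last exact/intD/ci_int/ltW.
  rewrite -RintegralZl //; last exact/intD/ci_int/ltW.
  apply: le_Rintegral => //.
  + exact/intD/ci_intZr/ltW.
  + exact/intD/ci_intZ/ltW.
  move=> t /= ht; have := sD _ ht; rewrite /= in_itv /= => /andP[t0 _].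
  move: ht; rewrite /= in_itv /= => /andP[_ td].
  apply: key => //; exact: ltW.
- rewrite -RintegralZr //; last exact/intE/ci_int/ltW.
  rewrite -RintegralZl //; last exact/intE/ci_int/ltW.
  apply: le_Rintegral => //.
  + exact/intE/ci_intZ/ltW.
  + exact/intE/ci_intZr/ltW.
  move=> t /= ht; have := sE _ ht; rewrite /= in_itv /= => /andP[_ t1].
  move: ht; rewrite /= in_itv /= => /andP[td _].
  apply: key => //; exact: ltW.
Qed.
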